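(* Let $G$ be a connected reductive linear algebraic group over an algebraically closed field $k$ of characteristic $p>0$ with Lie algebra $\mathfrak{g}$, and let $K\le G$ be a closed subgroup with Lie algebra $\mathfrak{k}$. Let $\mathbf{h}=(h_1,\dots,h_n)\in N_G(K)^n$. Suppose that there is a vector space decomposition $\mathfrak{g}=\mathfrak{k}\oplus\mathfrak{m}$ such that both $\mathfrak{k}$ and $\mathfrak{m}$ are stable under $\mathrm{Ad}_G(h_i)$ for $i=1,\dots,n$, and that the orbit map $G\to G\cdot\mathbf{h}\subseteq G^n$ is separable. Then the orbit map $K\to K\cdot\mathbf{h}$ is separable.
   Context: $N_G(K)$ is the normalizer of $K$ in $G$. $G$ (and $K$) act on $G^n$ by simultaneous conjugation $g\cdot(g_1,\dots,g_n)=(gg_1g^{-1},\dots,gg_ng^{-1})$. An orbit map $g\mapsto g\cdot\mathbf{h}$ onto its orbit is separable if it is a separable morphism, equivalently its differential at the identity is surjective onto the tangent space of the orbit at $\mathbf{h}$. *)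

(* Defs.v *)
From HB Require Import structures.
From mathcomp Require Import all_boot all_order all_algebra.
From mathcomp Require Import mpoly.
Set Implicit Arguments. Unset Strict Implicit. Unset Printing Implicit Defensive.
Import GRing.Theory.
Local Open Scope ring_scope.

(* Linear algebraic groups are realised concretely as Zariski-closed subgroups
   of GL_N(k), k algebraically closed.  Polynomial functions on the affine
   space M_N(k)^n are elements of {mpoly k[n*(N*N)]}, the coordinates of a
   tuple (g_1,...,g_n) being the entries of the g_i. *)

Section AlgGroups.
Variables (k : closedFieldType) (N : nat).

Definition mx := 'M[k]_N.

Definition coords (n : nat) (h : 'I_n -> mx) : 'I_(n * (N * N)) -> k :=
  fun i => mxvec (\matrix_(j < n) mxvec (h j)) 0 i.

Definition evalt (n : nat) (f : {mpoly k[n * (N * N)]}) (h : 'I_n -> mx) : k :=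
  f.@[coords h].

Definition dpoly (n : nat) (f : {mpoly k[n * (N * N)]}) (h v : 'I_n -> mx) : k :=
  \sum_(i < n * (N * N)) (mderiv i f).@[coords h] * coords v i.

Definition vanishes (n : nat) (S : ('I_n -> mx) -> Prop) (f : {mpoly k[n * (N * N)]}) :=
  forall h, S h -> evalt f h = 0.

(* Zariski tangent space at h of (the closure of) S, as a subspace of M_N^n *)
Definition tangent (n : nat) (S : ('I_n -> mx) -> Prop) (h : 'I_n -> mx)
  (v : 'I_n -> mx) : Prop :=
  forall f, vanishes S f -> dpoly f h v = 0.

Definition single (A : mx) : 'I_1 -> mx := fun _ => A.
Definition as1 (S : mx -> Prop) : ('I_1 -> mx) -> Prop :=
  fun h => S (h ord0).

Definition closed_subgroup (G : mx -> Prop) : Prop :=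
  [/\ G 1%:M,
      (forall g, G g -> g \in unitmx),
      (forall g h, G g -> G h -> G (g *m h)),
      (forall g, G g -> G (invmx g)) &
      exists F : {mpoly k[1 * (N * N)]} -> Prop,
        forall g, g \in unitmx -> (G g <-> forall f, F f -> evalt f (single g) = 0)].

(* connected (= irreducible): the vanishing ideal is prime *)
Definition connected_grp (G : mx -> Prop) : Prop :=
  forall f1 f2 : {mpoly k[1 * (N * N)]},
    vanishes (as1 G) (f1 * f2) -> vanishes (as1 G) f1 \/ vanishes (as1 G) f2.

Definition unipotent (g : mx) : Prop := (g - 1%:M) ^+ N = 0.

Definition normal_in (U G : mx -> Prop) : Prop :=
  (forall u, U u -> G u) /\ forall g u, G g -> U u -> U (g *m u *m invmx g).

(* reductive: trivial unipotent radical, i.e. no nontrivial closed connected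
   normal subgroup consisting of unipotent elements *)
Definition reductive (G : mx -> Prop) : Prop :=
  forall U, closed_subgroup U -> connected_grp U -> normal_in U G ->
    (forall u, U u -> unipotent u) -> forall u, U u -> u = 1%:M.

Definition lie (G : mx -> Prop) (X : mx) : Prop :=
  tangent (as1 G) (single 1%:M) (single X).

Definition normalizer (G K : mx -> Prop) (h : mx) : Prop :=
  G h /\ forall x, K x <-> K (h *m x *m invmx h).

Definition orbit (n : nat) (H : mx -> Prop) (h : 'I_n -> mx) : ('I_n -> mx) -> Prop :=
  fun y => exists g, H g /\ y = (fun i => g *m h i *m invmx g).

(* differential at 1 of the orbit map g |-> g.h *)
Definition dorbit (n : nat) (h : 'I_n -> mx) (X : mx) : 'I_n -> mx :=
  fun i => X *m h i - h i *m X.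

(* separability of the orbit map H -> H.h : its differential at the identity
   is surjective onto the tangent space of the orbit at h *)
Definition orbit_separable (n : nat) (H : mx -> Prop) (h : 'I_n -> mx) : Prop :=
  forall v, tangent (orbit H h) h v -> exists2 X, lie H X & v = dorbit h X.

Definition subspace (V : mx -> Prop) : Prop :=
  V 0 /\ forall (a : k) X Y, V X -> V Y -> V (a *: X + Y).

Definition Ad (h X : mx) : mx := h *m X *m invmx h.

End AlgGroups.

(* Main.v *)
Require Import Defs.
From HB Require Import structures.
From mathcomp Require Import all_boot all_order all_algebra.
From mathcomp Require Import mpoly.
From Stdlib Require Import FunctionalExtensionality.
Set Implicit Arguments. Unset Strict Implicit. Unset Printing Implicit Defensive.
Import GRing.Theory.
Local Open Scope ring_scope.

Section Chain.
Variables (R : comRingType).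

Definition Dir (n : nat) (a w : 'I_n -> R) (p : {mpoly R[n]}) : R :=
  \sum_(i < n) (mderiv i p).@[a] * w i.

Lemma DirD n a w (p q : {mpoly R[n]}) : Dir a w (p + q) = Dir a w p + Dir a w q.
Proof. rewrite /Dir -big_split; apply: eq_bigr => i _; by rewrite mderivD mevalD mulrDl. Qed.

Lemma Dir0 n a w : Dir a w (0 : {mpoly R[n]}) = 0.
Proof. rewrite /Dir big1 // => i _; by rewrite mderiv0 meval0 mul0r. Qed.

Lemma DirZ n a w c (p : {mpoly R[n]}) : Dir a w (c *: p) = c * Dir a w p.
Proof. rewrite /Dir mulr_sumr; apply: eq_bigr => i _; by rewrite mderivZ mevalZ mulrA. Qed.

Lemma DirMC n a w c (p : {mpoly R[n]}) : Dir a w (p * c%:MP) = Dir a w p * c.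
Proof. by rewrite mulrC mul_mpolyC DirZ mulrC. Qed.

Lemma DirM n a w (p q : {mpoly R[n]}) :
  Dir a w (p * q) = Dir a w p * q.@[a] + p.@[a] * Dir a w q.
Proof.
rewrite /Dir mulr_suml mulr_sumr -big_split; apply: eq_bigr => i _.
by rewrite mderivM mevalD !mevalM mulrDl; congr (_ + _); rewrite -!mulrA; congr (_ * _); rewrite mulrC.
Qed.

Lemma Dir1 n a w : Dir a w (1 : {mpoly R[n]}) = 0.
Proof. rewrite /Dir big1 // => i _; by rewrite -mpolyC1 mderivC meval0 mul0r. Qed.

Lemma mderivXU n (i j : 'I_n) : mderiv i ('X_j : {mpoly R[n]}) = (j == i)%:R%:MP.
Proof.
rewrite mderivX mnm1E; case: eqP => [->|_]; last by rewrite scale0r.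
have ->: (U_(i) - U_(i) = 0)%MM by apply/mnmP => l; rewrite mnmBE mnm0E subnn.
by rewrite mpolyX0 scale1r.
Qed.

Lemma DirX n a w (j : 'I_n) : Dir a w ('X_j : {mpoly R[n]}) = w j.
Proof.
rewrite /Dir (bigD1 j) //= big1 ?addr0 => [|i /negbTE ij].
  by rewrite mderivXU eqxx mevalC mul1r.
by rewrite mderivXU eq_sym ij mevalC mul0r.
Qed.

Lemma Dir_ext n (a1 a2 w1 w2 : 'I_n -> R) p :
  a1 =1 a2 -> w1 =1 w2 -> Dir a1 w1 p = Dir a2 w2 p.
Proof. move=> ea ew; rewrite /Dir; apply: eq_bigr => i _; by rewrite (meval_eq _ ea) ew. Qed.

Lemma chain n m (lq : n.-tuple {mpoly R[m]}) a w (p : {mpoly R[n]}) :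
  Dir a w (p \mPo lq) =
  Dir (fun j => (tnth lq j).@[a]) (fun j => Dir a w (tnth lq j)) p.
Proof.
set b := fun j => _; set u := fun j => _.
pose Q (p : {mpoly R[n]}) := Dir a w (p \mPo lq) = Dir b u p.
have QM p1 p2 : Q p1 -> Q p2 -> Q (p1 * p2).
  rewrite /Q => H1 H2; rewrite rmorphM !DirM H1 H2 !comp_mpoly_meval //.
have Q1 : Q 1 by rewrite /Q comp_mpoly1 !Dir1.
have QX i : Q 'X_i by rewrite /Q comp_mpolyXU DirX -tnth_nth.
have QXm mm : Q 'X_[mm].
  rewrite mpolyXE_id; apply: (big_ind Q) => // i _.
  elim: (mm i) => [|e IH]; first by rewrite expr0.
  by rewrite exprS; apply: QM.
elim/mpolyind: p => [|c mm p _ _ IH]; first by rewrite /Q comp_mpoly0 !Dir0.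
by rewrite /Q comp_mpolyD comp_mpolyZ !DirD !DirZ IH QXm.
Qed.
End Chain.

Section Mat.
Variables (k : closedFieldType) (N n : nat).
Local Notation MP := {mpoly k[n * (N * N)]}.

Definition Yv (i0 : 'I_n) : 'M[MP]_N :=
  \matrix_(a, b) 'X_(mxvec_index i0 (mxvec_index a b)).

Definition coordsP (M : 'M[MP]_N) (j : 'I_(1 * (N * N))) : MP :=
  mxvec (\matrix_(_ < 1) mxvec M) 0 j.

Lemma map_coords (f : MP -> k) M j :
  f (coordsP M j) = coords (single (map_mx f M)) j.
Proof.
rewrite /coordsP /coords /single.
have ->: forall A : 'rV[MP]_(1 * (N * N)), f (A 0 j) = (map_mx f A) 0 j by move=> A; rewrite mxE.
rewrite map_mxvec; congr (mxvec _ 0 j).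
by apply/matrixP => a b; rewrite !mxE -map_mxvec mxE.
Qed.

Lemma coords_Yv (y : 'I_n -> mx k N) i0 (a b : 'I_N) :
  coords y (mxvec_index i0 (mxvec_index a b)) = y i0 a b.
Proof. by rewrite /coords mxvecE mxE mxvecE. Qed.

Lemma eval_lq (y : 'I_n -> mx k N) i0 (M : 'M[k]_N) j :
  (coordsP (Yv i0 *m map_mx (@mpolyC _ k) M) j).@[coords y]
  = coords (single (y i0 *m M)) j.
Proof.
rewrite (map_coords (meval (coords y))); congr (coords (single _) j).
apply/matrixP => a b; rewrite !mxE; rewrite rmorph_sum /=; apply: eq_bigr => c _.
by rewrite !mxE mevalM mevalXU mevalC coords_Yv.
Qed.

Lemma Dir_sum m a w I (r : seq I) P (F : I -> {mpoly k[m]}) :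
  Dir a w (\sum_(x <- r | P x) F x) = \sum_(x <- r | P x) Dir a w (F x).
Proof.
elim/big_rec2: _ => [|x y1 y2 _ <-]; first exact: Dir0.
by rewrite DirD.
Qed.

Lemma Dir_lq (y v : 'I_n -> mx k N) i0 (M : 'M[k]_N) j :
  Dir (coords y) (coords v) (coordsP (Yv i0 *m map_mx (@mpolyC _ k) M) j)
  = coords (single (v i0 *m M)) j.
Proof.
rewrite (map_coords (Dir (coords y) (coords v))); congr (coords (single _) j).
apply/matrixP => a b; rewrite !mxE Dir_sum; apply: eq_bigr => c _.
by rewrite !mxE DirMC DirX coords_Yv.
Qed.
End Mat.

Lemma coords_lin (k : closedFieldType) N n (a : k) (u w : 'I_n -> mx k N) l :
  coords (fun j => a *: u j + w j) l = a * coords u l + coords w l.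
Proof.
rewrite /coords.
have ->: \matrix_(j < n) mxvec (a *: u j + w j) =
   a *: \matrix_(j < n) mxvec (u j) + \matrix_(j < n) mxvec (w j).
  by apply/matrixP => r c; rewrite !mxE linearP !mxE.
by rewrite linearP !mxE.
Qed.

Lemma lie_lin (k : closedFieldType) N (K : mx k N -> Prop) a X Y :
  lie K X -> lie K Y -> lie K (a *: X + Y).
Proof.
move=> lX lY f vf; rewrite /dpoly.
under eq_bigr => i _ do rewrite (coords_lin a (single X) (single Y)) mulrDr mulrCA.
by rewrite big_split /= -mulr_sumr; have := lX f vf; have := lY f vf;
  rewrite /dpoly => -> ->; rewrite mulr0 addr0.
Qed.

Lemma lie_sub (k : closedFieldType) N (K : mx k N -> Prop) X Y :
  lie K X -> lie K Y -> lie K (X - Y).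
Proof. by move=> lX lY; rewrite -scaleN1r addrC; apply: lie_lin. Qed.

Lemma zm (V : zmodType) (Y Z a b : V) : Z - b = Y + Z - (a + b) - (Y - a).
Proof. rewrite opprB opprD addrA (addrC _ a) !addrA -!addrA [Z + (- a + _)]addrCA [Y + (- a + _)]addrCA addNKr (addrC (- b)) [Z + (- Y + _)]addrCA addNKr //. Qed.

Theorem lemma5p2 (k : closedFieldType) (p : nat) (N n : nat)
  (G K : 'M[k]_N -> Prop) (h : 'I_n -> 'M[k]_N) (m : 'M[k]_N -> Prop) :
  prime p -> p \in [pchar k] ->
  closed_subgroup G -> connected_grp G -> reductive G ->
  closed_subgroup K -> (forall x, K x -> G x) ->
  (forall i, normalizer G K (h i)) ->
  subspace m -> (forall X, m X -> lie G X) ->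
  (forall X, lie K X -> m X -> X = 0) ->
  (forall X, lie G X -> exists Y Z, [/\ lie K Y, m Z & X = Y + Z]) ->
  (forall i X, lie K X -> lie K (Ad (h i) X)) ->
  (forall i X, m X -> m (Ad (h i) X)) ->
  orbit_separable G h ->
  orbit_separable K h.
Proof.
move=> _ _ [G1 Gu GM GV _] _ _ [K1 Ku KM KV _] KG hN [m0 msub] mG mK dec adK adm sepG v tv.
have hu i : h i \in unitmx by apply: Gu; case: (hN i).
have tvG : tangent (Defs.orbit G h) h v.
  move=> f vf; apply: tv => y [g [Kg ->]]; apply: vf; exists g; split => //; exact: KG.
case: (sepG v tvG) => X lX ev; subst v.
case: (dec X lX) => Y [Z [lY mZ eX]].
have key i : Z *m h i = h i *m Z.
  set W := dorbit h X i *m invmx (h i).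
  have lW : lie K W.
    move=> f vf.
    pose P := @Yv k N n i *m map_mx (@mpolyC _ k) (invmx (h i)).
    pose lq := [tuple coordsP P j | j < 1 * (N * N)].
    have Fv : vanishes (Defs.orbit K h) (f \mPo lq).
      move=> y [g [Kg ->]]; rewrite /evalt comp_mpoly_meval.
      rewrite (@meval_eq _ _ _ (coords (single (g *m h i *m invmx g *m invmx (h i))))); last first.
        by move=> j; rewrite tnth_mktuple eval_lq.
      apply: vf; rewrite /as1 /single.
      have := (proj1 ((hN i).2 (invmx g)) (KV g Kg)) => H.
      by have := KM _ _ Kg H; rewrite !mulmxA.
    have := tv _ Fv; rewrite /dpoly.
    change (Dir (coords h) (coords (dorbit h X)) (f \mPo lq) = 0 ->
            Dir (coords (single 1%:M)) (coords (single W)) f = 0).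
    rewrite chain => H; rewrite -[in RHS]H; apply: Dir_ext => j.
      rewrite /lq tnth_mktuple eval_lq; congr (coords (single _) j); symmetry; exact: mulmxV.
    by rewrite /lq tnth_mktuple Dir_lq.
  have eW : W = X - Ad (h i) X.
    by rewrite /W /dorbit /Ad mulmxBl -[X *m h i *m _]mulmxA mulmxV // mulmx1.
  have eZ : Z - Ad (h i) Z = W - (Y - Ad (h i) Y).
    by rewrite eW eX /Ad mulmxDr mulmxDl (zm Y Z (h i *m Y *m invmx (h i))).
  have l1 : lie K (Z - Ad (h i) Z).
    by rewrite eZ; apply: lie_sub => //; apply: lie_sub => //; apply: adK.
  have m1 : m (Z - Ad (h i) Z) by rewrite -scaleN1r addrC; apply: msub => //; apply: adm.
  move: (mK _ l1 m1) => /eqP; rewrite subr_eq0 => /eqP eZZ.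
  by rewrite {1}eZZ /Ad -mulmxA mulVmx ?mulmx1.
exists Y => //; apply: functional_extensionality => i.
by rewrite /dorbit eX mulmxDl mulmxDr key opprD addrACA subrr addr0.
Qed.
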